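(* For all $i < j$ in $\mathbb{N}$, the transposition $(i\ j)$ lies in the bi-immune symmetric group $G_{\mathfrak{B}}$.
   Context: $\mathbb{N}$ denotes the non-negative integers, and $\mathrm{Sym}(\mathbb{N})$ the group of all permutations of $\mathbb{N}$ under composition ($g \circ f$ means apply $f$ first). For $i \in \mathbb{N}$, $\sigma_{(i)}$ is the permutation swapping $i$ and $i+1$ and fixing all other numbers. For $A \subseteq \mathbb{N}$ with increasing enumeration $a_0 < a_1 < \cdots$, define $\sigma_A(x) = \lim_{n \to \infty} (\sigma_{(a_0)} \circ \sigma_{(a_1)} \circ \cdots \circ \sigma_{(a_n)})(x)$ (eventually constant for each $x$). A set $A$ is immune if it is infinite and contains no infinite computably enumerable subset; $A$ is bi-immune if both $A$ and $\mathbb{N} - A$ are immune. For bi-immune $A$, $\sigma_A$ is a permutation of $\mathbb{N}$. The bi-immune symmetric group $G_{\mathfrak{B}}$ is the subgroup of $\mathrm{Sym}(\mathbb{N})$ generated by $\{\sigma_A : A \text{ bi-immune}\}$. *)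

(* Defs.v *)
From Stdlib Require Import Arith List Lia.
Import ListNotations.

Inductive prf : Type :=
| PZero : prf
| PSucc : prf
| PProj : nat -> prf
| PComp : prf -> list prf -> prf
| PPrimRec : prf -> prf -> prf
| PMu : prf -> prf.

Inductive peval : prf -> list nat -> nat -> Prop :=
| ev_zero v : peval PZero v 0
| ev_succ x v : peval PSucc (x :: v) (S x)
| ev_proj i v : i < length v -> peval (PProj i) v (nth i v 0)
| ev_comp f gs v ys z :
    Forall2 (fun g y => peval g v y) gs ys -> peval f ys z -> peval (PComp f gs) v z
| ev_rec0 f g v y : peval f v y -> peval (PPrimRec f g) (0 :: v) y
| ev_recS f g n v y z :
    peval (PPrimRec f g) (n :: v) y -> peval g (n :: y :: v) z ->
    peval (PPrimRec f g) (S n :: v) z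
| ev_mu f v n :
    peval f (n :: v) 0 ->
    (forall m, m < n -> exists k, peval f (m :: v) (S k)) ->
    peval (PMu f) v n.

Definition ce (B : nat -> Prop) : Prop :=
  exists f : prf, forall x, B x <-> exists y, peval f [x] y.

Definition infinite_set (A : nat -> Prop) : Prop :=
  forall n, exists m, n <= m /\ A m.

Definition immune (A : nat -> Prop) : Prop :=
  infinite_set A /\
  ~ (exists B : nat -> Prop, (forall x, B x -> A x) /\ infinite_set B /\ ce B).

Definition bi_immune (A : nat -> Prop) : Prop :=
  immune A /\ immune (fun x => ~ A x).

Definition adj_swap (i x : nat) : nat :=
  if x =? i then S i else if x =? S i then i else x.

Definition transp (i j x : nat) : nat :=
  if x =? i then j else if x =? j then i else x.

Definition increasing_enum (A : nat -> Prop) (a : nat -> nat) : Prop :=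
  (forall n, a n < a (S n)) /\ (forall x, A x <-> exists n, a n = x).

Fixpoint prefix_comp (a : nat -> nat) (n x : nat) : nat :=
  match n with
  | 0 => adj_swap (a 0) x
  | S m => prefix_comp a m (adj_swap (a (S m)) x)
  end.

Definition is_sigma (A : nat -> Prop) (f : nat -> nat) : Prop :=
  exists a, increasing_enum A a /\
    forall x, exists N, forall n, N <= n -> prefix_comp a n x = f x.

Definition bi_immune_gen (f : nat -> nat) : Prop :=
  exists A, bi_immune A /\ is_sigma A f.

(** Subgroup of Sym(N) generated by a set S of permutations
    (permutations represented as functions, up to pointwise equality). *)
Inductive in_gen (S : (nat -> nat) -> Prop) : (nat -> nat) -> Prop :=
| ig_base f : S f -> in_gen S f
| ig_id : in_gen S (fun x => x)
| ig_comp f g : in_gen S f -> in_gen S g -> in_gen S (fun x => g (f x))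
| ig_inv f g : in_gen S f -> (forall x, f (g x) = x) -> (forall x, g (f x) = x) ->
    in_gen S g
| ig_ext f g : in_gen S f -> (forall x, f x = g x) -> in_gen S g.

Definition G_B (f : nat -> nat) : Prop := in_gen bi_immune_gen f.

(* Main.v *)
Require Import Defs.
From Stdlib Require Import Arith List Lia Classical ClassicalEpsilon.
Import ListNotations.
From mathcomp Require choice.

Module M.
Import choice.
Definition pk := (pickle : GenTree.tree nat -> nat).
Lemma pk_inj : forall a b, pk a = pk b -> a = b.
Proof. intros a b H. exact (ssrfun.pcan_inj (@pickleK _) H). Qed.
End M.

Definition TT := choice.GenTree.tree nat.

Fixpoint enc (f : prf) : TT :=
  match f with
  | PZero => choice.GenTree.Node 0 nil
  | PSucc => choice.GenTree.Node 1 nil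
  | PProj i => choice.GenTree.Node 2 (choice.GenTree.Leaf i :: nil)
  | PComp f gs => choice.GenTree.Node 3 (enc f :: map enc gs)
  | PPrimRec f g => choice.GenTree.Node 4 (enc f :: enc g :: nil)
  | PMu f => choice.GenTree.Node 5 (enc f :: nil)
  end.

Definition prf_ind2 (P : prf -> Prop)
  (H0 : P PZero) (H1 : P PSucc) (H2 : forall i, P (PProj i))
  (H3 : forall f gs, P f -> Forall P gs -> P (PComp f gs))
  (H4 : forall f g, P f -> P g -> P (PPrimRec f g))
  (H5 : forall f, P f -> P (PMu f)) : forall f, P f :=
  fix F f := match f with
  | PZero => H0 | PSucc => H1 | PProj i => H2 i
  | PComp f gs => H3 f gs (F f)
      ((fix G l := match l return Forall P l with
                   | nil => Forall_nil _
                   | cons g l' => Forall_cons _ (F g) (G l') end) gs)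
  | PPrimRec f g => H4 f g (F f) (F g)
  | PMu f => H5 f (F f) end.

Lemma enc_inj : forall f g, enc f = enc g -> f = g.
Proof.
  induction f using prf_ind2; intros g E; destruct g; simpl in E;
    try discriminate; inversion E; subst; try reflexivity.
  - f_equal; [apply IHf; auto|]. clear E; revert l H2.
    induction H; intros l0 Hm; destruct l0; simpl in Hm; try discriminate; auto.
    inversion Hm. f_equal; auto.
  - f_equal; auto.
  - f_equal; auto.
Qed.

Lemma enum_ex : exists en : nat -> prf, forall f, exists n, en n = f.
Proof.
  exists (fun n => match excluded_middle_informative (exists f, M.pk (enc f) = n) with
           | left H => proj1_sig (constructive_indefinite_description _ H)
           | right _ => PZero end).
  intros f. exists (M.pk (enc f)).
  destruct excluded_middle_informative as [H|H]; [|exfalso; eauto].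
  destruct (constructive_indefinite_description _ H) as [g Hg]; simpl.
  apply enc_inj, M.pk_inj, Hg.
Qed.

Definition W (f : prf) (z : nat) : Prop := exists v, peval f [z] v.

Lemma pick_ex (en : nat -> prf) (e b : nat) :
  exists p : nat * nat, b <= fst p /\ S (fst p) < snd p /\
    (infinite_set (W (en e)) -> W (en e) (fst p) /\ W (en e) (snd p)).
Proof.
  destruct (classic (infinite_set (W (en e)))) as [Hi|Hi].
  - destruct (Hi b) as [x [Hx Wx]]. destruct (Hi (S (S x))) as [y [Hy Wy]].
    exists (x, y); simpl; repeat split; auto; lia.
  - exists (b, S (S b)); simpl; repeat split; try lia; tauto.
Qed.

Definition pickf en e b := proj1_sig (constructive_indefinite_description _ (pick_ex en e b)).

Lemma pickf_spec en e b : b <= fst (pickf en e b) /\ S (fst (pickf en e b)) < snd (pickf en e b) /\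
    (infinite_set (W (en e)) -> W (en e) (fst (pickf en e b)) /\ W (en e) (snd (pickf en e b))).
Proof. unfold pickf. destruct constructive_indefinite_description; simpl; auto. Qed.

Fixpoint bnd en N e := match e with 0 => N | S e => S (snd (pickf en e (bnd en N e))) end.
Definition xs en N e := fst (pickf en e (bnd en N e)).
Definition ys en N e := snd (pickf en e (bnd en N e)).

Lemma bx en N e : bnd en N e <= xs en N e.
Proof. apply pickf_spec. Qed.
Lemma xy en N e : S (xs en N e) < ys en N e.
Proof. apply pickf_spec. Qed.
Lemma bS en N e : bnd en N (S e) = S (ys en N e).
Proof. reflexivity. Qed.

Lemma bnd_mono en N e e' : e < e' -> S (ys en N e) <= bnd en N e'.
Proof.
  induction 1.
  - rewrite bS; lia.
  - rewrite bS. pose proof (bx en N m). pose proof (xy en N m). lia.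
Qed.

Lemma bnd_ge en N e : N + e <= bnd en N e.
Proof.
  induction e; simpl; [lia|]. fold (ys en N e).
  pose proof (bx en N e). pose proof (xy en N e). lia.
Qed.

Lemma xs_gap en N e e' : e < e' -> xs en N e + 3 <= xs en N e'.
Proof.
  intros H. pose proof (bnd_mono en N e e' H). pose proof (bx en N e').
  pose proof (xy en N e). lia.
Qed.

Lemma ys_not_xs en N e e' : ys en N e <> xs en N e'.
Proof.
  intros H. destruct (lt_eq_lt_dec e e') as [[H1|H1]|H1].
  - pose proof (bnd_mono en N e e' H1). pose proof (bx en N e'). lia.
  - subst. pose proof (xy en N e'). lia.
  - pose proof (xs_gap en N e' e H1). pose proof (xy en N e). lia.
Qed.

Definition X en N z := exists e, xs en N e = z.

Lemma bi_immune_constr en N (Hen : forall f, exists n, en n = f) (Q : nat -> Prop) :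
  (forall z, Q z -> z < N) -> bi_immune (fun z => Q z \/ X en N z).
Proof.
  intros HQ. split; split.
  - intros n. exists (xs en N n). split; [|right; exists n; auto].
    pose proof (bnd_ge en N n). pose proof (bx en N n). lia.
  - intros [B [HBA [Hinf [f Hf]]]]. destruct (Hen f) as [e He].
    assert (Hi : infinite_set (W (en e))).
    { intros n. destruct (Hinf n) as [m [Hm Bm]]. exists m. split; auto.
      rewrite He. apply Hf; auto. }
    destruct (proj2 (proj2 (pickf_spec en e (bnd en N e))) Hi) as [_ Wy].
    fold (ys en N e) in Wy. rewrite He in Wy. apply Hf in Wy. apply HBA in Wy.
    destruct Wy as [Hq|[e' He']].
    + apply HQ in Hq. pose proof (bnd_ge en N e). pose proof (bx en N e). pose proof (xy en N e). lia.
    + exact (ys_not_xs en N e e' (eq_sym He')).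
  - intros n. exists (ys en N n). split.
    + pose proof (bnd_ge en N n). pose proof (bx en N n). pose proof (xy en N n). lia.
    + intros [Hq|[e' He']].
      * apply HQ in Hq. pose proof (bnd_ge en N n). pose proof (bx en N n). pose proof (xy en N n). lia.
      * exact (ys_not_xs en N n e' (eq_sym He')).
  - intros [B [HBA [Hinf [f Hf]]]]. destruct (Hen f) as [e He].
    assert (Hi : infinite_set (W (en e))).
    { intros n. destruct (Hinf n) as [m [Hm Bm]]. exists m. split; auto.
      rewrite He. apply Hf; auto. }
    destruct (proj2 (proj2 (pickf_spec en e (bnd en N e))) Hi) as [Wx _].
    fold (xs en N e) in Wx. rewrite He in Wx. apply Hf in Wx. apply HBA in Wx.
    apply Wx. right. exists e. auto.
Qed.

Definition swapf (A : nat -> Prop) (z : nat) : nat :=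
  match excluded_middle_informative (A z) with
  | left _ => S z
  | right _ => match excluded_middle_informative (0 < z /\ A (pred z)) with
               | left _ => pred z | right _ => z end end.

Lemma swapf_in A z : A z -> swapf A z = S z.
Proof. unfold swapf; destruct excluded_middle_informative; tauto. Qed.
Lemma swapf_pred A w : ~ A (S w) -> A w -> swapf A (S w) = w.
Proof.
  unfold swapf; intros; destruct excluded_middle_informative; [tauto|].
  destruct excluded_middle_informative as [|n1]; simpl; auto.
  exfalso; apply n1; split; simpl; auto; lia.
Qed.
Lemma swapf_out A z : ~ A z -> (forall w, z = S w -> ~ A w) -> swapf A z = z.
Proof.
  unfold swapf; intros H1 H2; destruct excluded_middle_informative; [tauto|].
  destruct excluded_middle_informative as [[Hp Ha]|]; auto.
  destruct z; [lia|]. exfalso. apply (H2 z); auto.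
Qed.

Section Gap.
Lemma gap_mono (a : nat -> nat) : (forall n, S (a n) < a (S n)) ->
  forall k m, k < m -> S (a k) < a m.
Proof.
  intros Hg k m H. induction H; [apply Hg|]. specialize (Hg m). lia.
Qed.

Lemma gap_ge (a : nat -> nat) : (forall n, S (a n) < a (S n)) -> forall k, k <= a k.
Proof. intros Hg k. induction k; [lia|]. specialize (Hg k). lia. Qed.

Lemma pc_spec (a : nat -> nat) : (forall n, S (a n) < a (S n)) -> forall n,
  (forall k, k <= n -> prefix_comp a n (a k) = S (a k)) /\
  (forall k, k <= n -> prefix_comp a n (S (a k)) = a k) /\
  (forall z, (forall k, k <= n -> a k <> z /\ S (a k) <> z) -> prefix_comp a n z = z).
Proof.
  intros Hg. pose proof (gap_mono a Hg) as Hm.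
  induction n as [|n [IH1 [IH2 IH3]]]; simpl.
  - repeat split; intros.
    + assert (k = 0) by lia; subst. unfold adj_swap. rewrite Nat.eqb_refl. auto.
    + assert (k = 0) by lia; subst. unfold adj_swap.
      destruct (Nat.eqb_spec (S (a 0)) (a 0)); [lia|]. rewrite Nat.eqb_refl. auto.
    + unfold adj_swap. destruct (H 0 (le_n 0)).
      destruct (Nat.eqb_spec z (a 0)); [congruence|].
      destruct (Nat.eqb_spec z (S (a 0))); congruence.
  - repeat split; intros.
    + destruct (Nat.eq_dec k (S n)) as [->|Hk].
      * unfold adj_swap. rewrite Nat.eqb_refl. apply IH3.
        intros k' Hk'. specialize (Hm k' (S n) ltac:(lia)). lia.
      * specialize (Hm k (S n) ltac:(lia)).
        unfold adj_swap. destruct (Nat.eqb_spec (a k) (a (S n))); [lia|].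
        destruct (Nat.eqb_spec (a k) (S (a (S n)))); [lia|]. apply IH1; lia.
    + destruct (Nat.eq_dec k (S n)) as [->|Hk].
      * unfold adj_swap. destruct (Nat.eqb_spec (S (a (S n))) (a (S n))); [lia|].
        rewrite Nat.eqb_refl. apply IH3.
        intros k' Hk'. specialize (Hm k' (S n) ltac:(lia)). lia.
      * specialize (Hm k (S n) ltac:(lia)).
        unfold adj_swap. destruct (Nat.eqb_spec (S (a k)) (a (S n))); [lia|].
        destruct (Nat.eqb_spec (S (a k)) (S (a (S n)))); [lia|]. apply IH2; lia.
    + destruct (H (S n) (le_n _)).
      unfold adj_swap. destruct (Nat.eqb_spec z (a (S n))); [congruence|].
      destruct (Nat.eqb_spec z (S (a (S n)))); [congruence|]. apply IH3.
      intros k Hk; apply H; lia.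
Qed.

Lemma sigma_gap (A : nat -> Prop) (a : nat -> nat) :
  (forall n, S (a n) < a (S n)) -> (forall z, A z <-> exists n, a n = z) ->
  is_sigma A (swapf A).
Proof.
  intros Hg HA. exists a. split.
  - split; auto. intros n; specialize (Hg n); lia.
  - intros x. exists x. intros n Hn.
    pose proof (gap_ge a Hg) as Hge. destruct (pc_spec a Hg n) as [P1 [P2 P3]].
    destruct (classic (A x)) as [Hx|Hx].
    + rewrite swapf_in by auto. destruct (proj1 (HA x) Hx) as [k <-].
      apply P1. specialize (Hge k). lia.
    + destruct (classic (exists w, x = S w /\ A w)) as [[w [-> Hw]]|Hn2].
      * rewrite swapf_pred by auto. destruct (proj1 (HA w) Hw) as [k <-].
        apply P2. specialize (Hge k). lia.
      * rewrite swapf_out; auto.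
        -- apply P3. intros k Hk. split; intros E.
           ++ apply Hx, HA. eauto.
           ++ apply Hn2. exists (a k). split; auto. apply HA; eauto.
        -- intros w Hw Aw. apply Hn2; eauto.
Qed.
End Gap.

Lemma adj_in_G : forall i, G_B (adj_swap i).
Proof.
  intros i. destruct enum_ex as [en Hen].
  set (N := S (S i)).
  set (X0 := X en N).
  assert (HX2 : forall z, X0 z -> S (S i) <= z).
  { intros z [e <-]. pose proof (bnd_ge en N e). pose proof (bx en N e). unfold N in *. lia. }
  assert (HXS : forall z, X0 z -> ~ X0 (S z)).
  { intros z [e <-] [e' He']. destruct (lt_eq_lt_dec e e') as [[H1|H1]|H1].
    - pose proof (xs_gap en N e e' H1). lia.
    - subst. lia.
    - pose proof (xs_gap en N e' e H1). lia. }
  set (A1 := fun z => z = i \/ X0 z).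
  set (A0 := fun z => False \/ X0 z).
  assert (G1 : G_B (swapf A1)).
  { apply ig_base. exists A1. split.
    - apply bi_immune_constr; auto. intros z ->. unfold N; lia.
    - apply sigma_gap with (a := fun n => match n with 0 => i | S n => xs en N n end).
      + intros [|n].
        * pose proof (bnd_ge en N 0). pose proof (bx en N 0). unfold N in *. lia.
        * pose proof (xs_gap en N n (S n) ltac:(lia)). lia.
      + intros z. unfold A1, X0, X. split.
        * intros [->|[e <-]]; [exists 0|exists (S e)]; auto.
        * intros [[|n] <-]; auto. right; eauto. }
  assert (G0 : G_B (swapf A0)).
  { apply ig_base. exists A0. split.
    - apply bi_immune_constr; auto. intros z [].
    - apply sigma_gap with (a := xs en N).
      + intros n. pose proof (xs_gap en N n (S n) ltac:(lia)). lia.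
      + intros z. unfold A0, X0, X. split.
        * intros [[]|H]; auto.
        * intros H; auto. }
  apply ig_ext with (f := fun z => swapf A0 (swapf A1 z)).
  { apply ig_comp; auto. }
  intros z. unfold adj_swap.
  assert (E0 : forall z, A0 z <-> X0 z) by (unfold A0; tauto).
  destruct (Nat.eqb_spec z i) as [->|Hzi].
  - rewrite (swapf_in A1 i) by (unfold A1; left; auto).
    apply swapf_out.
    + rewrite E0. intros H. apply HX2 in H. lia.
    + intros w Hw. injection Hw as <-. rewrite E0. intros H; apply HX2 in H; lia.
  - destruct (Nat.eqb_spec z (S i)) as [->|Hzi1].
    + rewrite (swapf_pred A1 i).
      * apply swapf_out.
        -- rewrite E0. intros H; apply HX2 in H; lia.
        -- intros w Hw; subst. rewrite E0. intros H; apply HX2 in H; lia.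
      * intros [H|H]; [lia|]. apply HX2 in H; lia.
      * unfold A1; left; auto.
    +
      destruct (classic (X0 z)) as [Hx|Hx].
      * rewrite (swapf_in A1 z) by (unfold A1; right; auto).
        rewrite (swapf_pred A0 z); auto.
        -- rewrite E0. apply HXS; auto.
        -- apply E0; auto.
      * destruct (classic (exists w, z = S w /\ X0 w)) as [[w [-> Hw]]|Hn].
        -- rewrite (swapf_pred A1 w).
           ++ apply swapf_in, E0; auto.
           ++ intros [H|H]; [lia|tauto].
           ++ unfold A1; right; auto.
        -- rewrite (swapf_out A1 z).
           ++ apply swapf_out.
              ** rewrite E0; auto.
              ** intros w Hw Aw. apply Hn. exists w. split; auto. apply E0; auto.
           ++ intros [H|H]; [lia|tauto].
           ++ intros w Hw [H|H]; [lia|]. apply Hn; eauto.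
Qed.

Theorem lemma2p4 : forall i j : nat, i < j -> G_B (transp i j).
Proof.
  intros i j H. induction H.
  - apply ig_ext with (f := adj_swap i); [apply adj_in_G|].
    intros z. unfold adj_swap, transp.
    destruct (Nat.eqb_spec z i); destruct (Nat.eqb_spec z (S i)); auto.
  - apply ig_ext with (f := fun z => adj_swap m (transp i m (adj_swap m z))).
    + apply ig_comp; [|apply adj_in_G]. apply ig_comp; [apply adj_in_G|auto].
    + intros z. unfold adj_swap, transp.
      repeat (cbv beta iota; match goal with |- context [?a =? ?b] =>
        lazymatch a with context [if _ then _ else _] => fail | _ =>
        lazymatch b with context [if _ then _ else _] => fail | _ =>
        destruct (Nat.eqb_spec a b) end end end);
      lia.
Qed.
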